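(* For the Curie–Weiss model, for every fixed $0\le\beta<1$ and every integer $n\ge2$ there is a constant $C=C(n,\beta)>0$ such that for all $N\ge 2n$ and all pairwise distinct indices $i_1,j_1,\dots,i_n,j_n\in\{1,\dots,N\}$, $$\bigl|\langle\sigma_{i_1}\sigma_{j_1},\sigma_{i_2}\sigma_{j_2},\dots,\sigma_{i_n}\sigma_{j_n}\rangle_c\bigr|\le\frac{C}{N}.$$
   Context: Curie–Weiss model: for $\sigma\in\{-1,1\}^N$, $\mathcal H_N(\sigma)=-\frac1N\sum_{1\le i<j\le N}\sigma_i\sigma_j$, $Z_N(\beta)=\sum_\sigma e^{-\beta\mathcal H_N(\sigma)}$, and $\langle A\rangle=Z_N(\beta)^{-1}\sum_\sigma A(\sigma)e^{-\beta\mathcal H_N(\sigma)}$. The pairwise $n$-point connected correlation is the joint cumulant of $X_k=\sigma_{i_k}\sigma_{j_k}$, $k=1,\dots,n$, under $\langle\cdot\rangle$: $$\langle X_1,\dots,X_n\rangle_c=\sum_{\pi}(-1)^{|\pi|-1}(|\pi|-1)!\prod_{B\in\pi}\Bigl\langle\prod_{k\in B}X_k\Bigr\rangle,$$ the sum running over all set partitions $\pi$ of $\{1,\dots,n\}$ ($|\pi|$ = number of blocks); equivalently $\langle X_1,\dots,X_n\rangle_c=\langle X_1\cdots X_n\rangle$ minus the sum over all nontrivial partitions of products of lower-order connected correlations of the blocks. *)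

(* Defs.v *)
From HB Require Import structures.
From mathcomp Require Import all_boot all_order all_algebra.
From mathcomp Require Import reals.
From mathcomp Require Import sequences exp.
Set Implicit Arguments. Unset Strict Implicit. Unset Printing Implicit Defensive.
Import Order.TTheory GRing.Theory Num.Theory.
Local Open Scope ring_scope.

(* A configuration sigma in {-1,1}^N is encoded as a boolean finfun;
   the spin value is +1 for true and -1 for false. *)
Definition config (N : nat) := {ffun 'I_N -> bool}.

Definition spin {R : realType} {N : nat} (s : config N) (i : 'I_N) : R :=
  if s i then 1 else -1.

Definition CW_H {R : realType} (N : nat) (s : config N) : R :=
  - (N%:R)^-1 * \sum_(i : 'I_N) \sum_(j : 'I_N | (i < j)%N) spin s i * spin s j.

Definition CW_weight {R : realType} (N : nat) (beta : R) (s : config N) : R :=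
  expR (- beta * CW_H s).

Definition CW_Z {R : realType} (N : nat) (beta : R) : R :=
  \sum_(s : config N) CW_weight beta s.

Definition CW_gibbs {R : realType} (N : nat) (beta : R) (A : config N -> R) : R :=
  (CW_Z N beta)^-1 * \sum_(s : config N) A s * CW_weight beta s.

Definition set_partitions (n : nat) : {set {set {set 'I_n}}} :=
  [set P : {set {set 'I_n}} | partition P [set: 'I_n]].

Definition cumulant {R : realType} (N n : nat) (beta : R)
    (X : 'I_n -> config N -> R) : R :=
  \sum_(P in set_partitions n)
     (-1) ^+ (#|P|.-1) * ((#|P|.-1)`!)%:R *
     \prod_(B in P) CW_gibbs beta (fun s => \prod_(k in B) X k s).

Definition pair_corr {R : realType} (N n : nat) (beta : R)
    (i j : 'I_n -> 'I_N) : R :=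
  cumulant beta (fun k s => spin s (i k) * spin s (j k)).

Definition pairwise_distinct (N n : nat) (i j : 'I_n -> 'I_N) : Prop :=
  injective i /\ injective j /\ (forall k l, i k <> j l).

(* Main.v *)
Require Import Defs.
From HB Require Import structures.
From mathcomp Require Import all_boot all_order all_algebra.
From mathcomp Require Import reals.
From mathcomp Require Import sequences exp.
From mathcomp Require Import boolp classical_sets topology normedtype derive.
From mathcomp Require Import ring lra.
Import Order.TTheory GRing.Theory Num.Theory.
Import numFieldNormedType.Exports.
Local Open Scope ring_scope.
Section Tanh.
Variable R : realType.
Local Open Scope classical_set_scope.
Definition hh (y : R) := (1 + y) * expR (- y) - (1 - y) * expR y.

Lemma hh_der (x : R) : is_derive x 1 hh (x * expR x - x * expR (- x)).
Proof. rewrite /hh. apply: trigger_derive. rewrite /GRing.scale /=. ring. Qed.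

Lemma hh_ge0 (y : R) : 0 <= y -> 0 <= hh y.
Proof.
rewrite le_eqVlt => /orP[/eqP<-|y0].
  by rewrite /hh oppr0 expR0; lra.
have cont : continuous hh.
  move=> x; apply/differentiable_continuous/derivable1_diffP.
  by case: (hh_der x).
have [c] := MVT y0 (fun x _ => hh_der x) (continuous_subspaceT cont).
rewrite in_itv /= => /andP[c0 _] E.
have h0 : hh 0 = 0 by rewrite /hh oppr0 expR0; lra.
move: E; rewrite h0 subr0 subr0 => ->.
apply: mulr_ge0; last lra.
rewrite -mulrBr mulr_ge0 ?subr_ge0 ?ler_expR; lra.
Qed.
Local Close Scope classical_set_scope.

Definition tnh (y : R) := (expR y - expR (- y)) / (expR y + expR (- y)).

Lemma den_gt0 (y : R) : 0 < expR y + expR (- y).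
Proof. by rewrite addr_gt0 ?expR_gt0. Qed.

Lemma tnhN (y : R) : tnh (- y) = - tnh y.
Proof. by rewrite /tnh opprK -mulNr opprB [expR y + _]addrC. Qed.

Lemma tnh_le (y : R) : 0 <= y -> tnh y <= y.
Proof.
move=> y0; rewrite /tnh ler_pdivrMr ?den_gt0 //.
have := @hh_ge0 y y0; rewrite /hh; lra.
Qed.

Lemma tnh_ge0 (y : R) : 0 <= y -> 0 <= tnh y.
Proof.
move=> y0; rewrite /tnh divr_ge0 ?subr_ge0 ?ler_expR ?(ltW (den_gt0 _)) //; lra.
Qed.

Lemma tnh_ge (y : R) : 0 <= y -> y - y ^+ 2 <= tnh y.
Proof.
move=> y0; have [y1|y1] := leP 1 y.
  apply: le_trans (@tnh_ge0 y y0); nra.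
rewrite /tnh ler_pdivlMr ?den_gt0 //.
set A := expR y; set B := expR (- y).
have hA : 1 + y <= A by apply: expR_ge1Dx.
have hB : 1 - y <= B by rewrite /B -[1 - y]/(1 + - y); apply: expR_ge1Dx.
have AB : A * B = 1 by rewrite /A /B -expRD subrr expR0.
have A0 : 0 < A by apply: expR_gt0.
have B0 : 0 < B by apply: expR_gt0.
nra.
Qed.

Lemma yN (y : R) : y < 0 -> 0 < - y. Proof. by rewrite oppr_gt0. Qed.

Lemma tnh_T1 (y : R) : y * tnh y <= y ^+ 2.
Proof.
have [y0|y0] := leP 0 y.
  by rewrite expr2 ler_wpM2l // tnh_le.
have := @tnh_le (- y) (ltW (@yN y y0)).
rewrite tnhN; nra.
Qed.

Lemma tnh_T2 (y : R) : `|tnh y - y| <= y ^+ 2.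
Proof.
have [y0|y0] := leP 0 y.
  have := @tnh_le y y0; have := @tnh_ge y y0.
  rewrite ler_norml; lra.
have h1 := @tnh_le (- y) (ltW (@yN y y0)).
have h2 := @tnh_ge (- y) (ltW (@yN y y0)).
rewrite tnhN sqrrN in h1 h2.
rewrite ler_norml; lra.
Qed.

End Tanh.
Arguments tnh {R} y.
Arguments den_gt0 {R} y.
Arguments tnh_T1 {R} y.
Arguments tnh_T2 {R} y.
Arguments tnh_le {R} y.
Section Gibbs.
Variable R : realType.
Variable N : nat.
Variable beta : R.
Hypothesis N0 : (0 < N)%N.

Local Notation sp := (@spin R N).
Local Notation w := (@CW_weight R N beta).
Definition Sm (s : config N) : R := \sum_i sp s i.
Definition E (f : config N -> R) := CW_gibbs beta f.

Lemma w_gt0 s : 0 < w s.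
Proof. exact: expR_gt0. Qed.

Lemma Z_gt0 : 0 < CW_Z N beta.
Proof.
rewrite /CW_Z (bigD1 [ffun=> true]) //=.
by rewrite ltr_pwDl ?w_gt0 // sumr_ge0 // => s _; exact/ltW/w_gt0.
Qed.

Lemma E_add f g : E (fun s => f s + g s) = E f + E g.
Proof.
rewrite /E /CW_gibbs -mulrDr -big_split /=; congr (_ * _).
by apply: eq_bigr => s _; rewrite mulrDl.
Qed.

Lemma E_scale c f : E (fun s => c * f s) = c * E f.
Proof.
rewrite /E /CW_gibbs mulrCA; congr (_ * _); rewrite mulr_sumr.
by apply: eq_bigr => s _; rewrite mulrA.
Qed.

Lemma E_sum (I : Type) (r : seq I) (P : pred I) (F : I -> config N -> R) :
  E (fun s => \sum_(k <- r | P k) F k s) = \sum_(k <- r | P k) E (F k).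
Proof.
rewrite /E /CW_gibbs -mulr_sumr; congr (_ * _).
under eq_bigr do rewrite mulr_suml.
by rewrite exchange_big.
Qed.

Lemma E_const c : E (fun=> c) = c.
Proof.
rewrite /E /CW_gibbs -mulr_sumr /CW_Z mulrCA mulVf ?mulr1 //.
exact: lt0r_neq0 Z_gt0.
Qed.

Lemma E_le f g : (forall s, f s <= g s) -> E f <= E g.
Proof.
move=> fg; rewrite /E /CW_gibbs ler_wpM2l // ?invr_ge0 ?(ltW Z_gt0) //.
by apply: ler_sum => s _; rewrite ler_wpM2r // ltW // w_gt0.
Qed.

Lemma E_norm f : `|E f| <= E (fun s => `|f s|).
Proof.
rewrite /E /CW_gibbs normrM ger0_norm ?invr_ge0 ?(ltW Z_gt0) //.
rewrite ler_wpM2l // ?invr_ge0 ?(ltW Z_gt0) //.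
apply: le_trans (ler_norm_sum _ _ _) _.
by apply: ler_sum => s _; rewrite normrM (ger0_norm (ltW (w_gt0 s))).
Qed.

Lemma E_bound f c : (forall s, `|f s| <= c) -> `|E f| <= c.
Proof.
move=> h; apply: le_trans (E_norm f) _.
by rewrite -[X in _ <= X](E_const c); apply: E_le.
Qed.


Lemma sp_pm s i : sp s i = 1 \/ sp s i = -1.
Proof. by rewrite /spin; case: (s i); [left|right]. Qed.

Lemma sp_sq s i : sp s i ^+ 2 = 1.
Proof. by case: (sp_pm s i) => ->; rewrite ?expr1n ?sqrrN ?expr1n. Qed.

Lemma sp_norm s i : `|sp s i| = 1.
Proof. by case: (sp_pm s i) => ->; rewrite ?normrN normr1. Qed.

Lemma pair_sum (x : 'I_N -> R) :
  \sum_(i : 'I_N) \sum_(j : 'I_N | (i < j)%N) x i * x j =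
  ((\sum_i x i) ^+ 2 - \sum_i x i ^+ 2) / 2.
Proof.
have E1 : (\sum_i x i) ^+ 2 = \sum_i \sum_(j : 'I_N) x i * x j.
  by rewrite expr2 mulr_suml; apply: eq_bigr => i _; rewrite mulr_sumr.
have E2 : forall i, \sum_(j : 'I_N) x i * x j =
    \sum_(j : 'I_N | (i < j)%N) x i * x j + x i ^+ 2 + \sum_(j : 'I_N | (j < i)%N) x i * x j.
  move=> i; rewrite [LHS](bigID (fun j : 'I_N => (i < j)%N)) /= -addrA; congr (_ + _).
  rewrite (bigD1 i) /= ?ltnn // expr2; congr (_ + _).
  apply: eq_bigl => j; rewrite -leqNgt.
  by rewrite andbC ltn_neqAle -val_eqE.
have E3 : \sum_(i : 'I_N) \sum_(j : 'I_N | (j < i)%N) x i * x j =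
          \sum_(i : 'I_N) \sum_(j : 'I_N | (i < j)%N) x i * x j.
  rewrite (eq_bigr (fun i : 'I_N => \sum_(j : 'I_N) (if (j < i)%N then x i * x j else 0)));
    last by move=> i _; rewrite big_mkcond.
  rewrite exchange_big /=; apply: eq_bigr => i _.
  by rewrite [RHS]big_mkcond /=; apply: eq_bigr => j _; case: ifP; rewrite // mulrC.
have E4 : (\sum_i x i) ^+ 2 = \sum_(i : 'I_N) \sum_(j : 'I_N | (i < j)%N) x i * x j
   + \sum_i x i ^+ 2 + \sum_(i : 'I_N) \sum_(j : 'I_N | (j < i)%N) x i * x j.
  by rewrite E1 -!big_split; apply: eq_bigr => i _; exact: E2 i.
by rewrite E4 E3; field.
Qed.

Lemma H_eq s : CW_H s = - (N%:R)^-1 * ((Sm s ^+ 2 - N%:R) / 2).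
Proof.
rewrite /CW_H pair_sum; congr (_ * ((_ - _) / 2)).
by rewrite (eq_bigr (fun _ => 1)) => [|i _]; rewrite ?sp_sq // sumr_const card_ord.
Qed.

Definition Sp (a : 'I_N) (s : config N) : R := \sum_(c | c != a) sp s c.
Definition yv (a : 'I_N) (s : config N) : R := beta / N%:R * Sp a s.
Definition Kf (a : 'I_N) (s : config N) : R :=
  expR (beta * (N%:R)^-1 * ((Sp a s ^+ 2 + 1 - N%:R) / 2)).

Lemma Sm_split a s : Sm s = sp s a + Sp a s.
Proof. by rewrite /Sm (bigD1 a). Qed.

Lemma w_split a s : w s = expR (yv a s * sp s a) * Kf a s.
Proof.
rewrite /CW_weight H_eq /Kf -expRD; congr expR.
have NZ : (N%:R : R) != 0 by rewrite pnatr_eq0 -lt0n.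
rewrite (Sm_split a) /yv; case: (sp_pm s a) => ->; field; exact: NZ.
Qed.

Definition flip (a : 'I_N) (s : config N) : config N :=
  [ffun i => if i == a then ~~ s a else s i].

Lemma flipK a : involutive (flip a).
Proof.
move=> s; apply/ffunP => i; rewrite !ffunE.
by case: eqP => [->|//]; rewrite eqxx negbK.
Qed.

Lemma sp_flip_a a s : sp (flip a s) a = - sp s a.
Proof. by rewrite /spin ffunE eqxx; case: (s a); rewrite ?opprK. Qed.

Lemma sp_flip_c a c s : c != a -> sp (flip a s) c = sp s c.
Proof. by move=> ca; rewrite /spin ffunE (negbTE ca). Qed.

Lemma Sp_flip a s : Sp a (flip a s) = Sp a s.
Proof. by apply: eq_bigr => c ca; rewrite sp_flip_c. Qed.

Lemma pair_zero (f0 K0 y sg : R) : sg = 1 \/ sg = -1 ->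
  (sg - tnh y) * f0 * (expR (y * sg) * K0) +
  (- sg - tnh y) * f0 * (expR (y * - sg) * K0) = 0.
Proof.
have d := den_gt0 y; rewrite /tnh.
case=> ->; rewrite ?opprK ?mulr1 ?mulrN1 ?opprK; field; exact: lt0r_neq0.
Qed.

Lemma flip_id a f : (forall s, f (flip a s) = f s) ->
  \sum_s sp s a * f s * w s = \sum_s tnh (yv a s) * f s * w s.
Proof.
move=> fi; apply/eqP; rewrite -subr_eq0 -sumrB; apply/eqP.
set G := fun s => sp s a * f s * w s - tnh (yv a s) * f s * w s.
have e1 : \sum_s G s = \sum_s G (flip a s).
  exact: (reindex_inj (can_inj (flipK a))).
have e2 : \sum_s G s + \sum_s G (flip a s) = 0.
  rewrite -big_split big1 // => s _; rewrite /G fi !(w_split a) sp_flip_a.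
  rewrite /yv Sp_flip /Kf Sp_flip -/(Kf a s) -/(yv a s).
  rewrite -[RHS](pair_zero (f s) (Kf a s) (yv a s) (sp s a) (sp_pm s a)) /=; ring.
have e3 : \sum_s G s = 0 by lra.
exact: e3.
Qed.

Lemma E_flip a f : (forall s, f (flip a s) = f s) ->
  E (fun s => sp s a * f s) = E (fun s => tnh (yv a s) * f s).
Proof.
move=> fi; rewrite /E /CW_gibbs; congr (_ * _).
exact: flip_id.
Qed.


Hypothesis hb0 : 0 <= beta.
Hypothesis hb1 : beta < 1.

Lemma tnh_lin (c x : R) : 0 <= c -> tnh (c * x) * x <= c * x ^+ 2.
Proof.
rewrite le_eqVlt => /orP[/eqP<-|c0].
  by rewrite !mul0r /tnh oppr0 subrr mul0r mul0r.
rewrite -(ler_pM2l c0).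
have -> : c * (tnh (c * x) * x) = c * x * tnh (c * x) by ring.
have -> : c * (c * x ^+ 2) = (c * x) ^+ 2 by ring.
exact: tnh_T1.
Qed.

Lemma Sp_eq a s : Sp a s = Sm s - sp s a.
Proof. by rewrite (Sm_split a) [sp s a + _]addrC addrK. Qed.

Lemma Sm2_eq s : Sm s ^+ 2 = \sum_a (1 + sp s a * Sp a s).
Proof.
rewrite expr2 {1}/Sm mulr_suml; apply: eq_bigr => a _.
by rewrite {1}(Sm_split a) mulrDr -expr2 sp_sq.
Qed.

Lemma sumSp2 s : \sum_a Sp a s ^+ 2 = (N%:R - 2) * Sm s ^+ 2 + N%:R.
Proof.
have h a : Sp a s ^+ 2 = (Sm s ^+ 2 + 1) - (2 * Sm s) * sp s a.
  by rewrite Sp_eq sqrrB sp_sq; ring.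
rewrite (eq_bigr _ (fun a _ => h a)) sumrB sumr_const card_ord -mulr_sumr.
by rewrite -/(Sm s) -mulr_natr; ring.
Qed.

Lemma E_ge0 f : (forall s, 0 <= f s) -> 0 <= E f.
Proof. by move=> h; rewrite -(E_const 0); apply: E_le. Qed.

Let nN : (1 <= (N%:R : R)).
Proof. by rewrite ler1n. Qed.

Lemma E_ext f g : (forall s, f s = g s) -> E f = E g.
Proof.
by move=> h; rewrite /E /CW_gibbs; congr (_ * _); apply: eq_bigr => s _; rewrite h.
Qed.

Lemma ES2 : E (fun s => Sm s ^+ 2) * (1 - beta) <= N%:R + 1.
Proof.
set X := E _.
have X0 : 0 <= X by apply: E_ge0 => s; exact: sqr_ge0.
have e1 : X = \sum_a (1 + E (fun s => sp s a * Sp a s)).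
  rewrite /X (@E_ext _ _ (fun s => Sm2_eq s)) E_sum; apply: eq_bigr => a _.
  by rewrite E_add E_const.
have e2 a : E (fun s => sp s a * Sp a s) <= beta / N%:R * E (fun s => Sp a s ^+ 2).
  rewrite (@E_flip a (Sp a) (Sp_flip a)) -E_scale; apply: E_le => s.
  rewrite /yv; apply: tnh_lin; exact: divr_ge0.
have e3 : \sum_a E (fun s => Sp a s ^+ 2) = (N%:R - 2) * X + N%:R.
  by rewrite -E_sum (@E_ext _ _ (fun s => sumSp2 s)) E_add E_scale E_const.
have step : X <= N%:R + beta / N%:R * ((N%:R - 2) * X + N%:R).
  rewrite {1}e1; apply: le_trans (_ : \sum_(a : 'I_N) (1 + beta / N%:R * E (fun s => Sp a s ^+ 2)) <= _).
    by apply: ler_sum => a _; rewrite lerD2l e2.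
  by rewrite big_split /= sumr_const card_ord -mulr_sumr e3.
have NZ : (N%:R : R) != 0 by rewrite pnatr_eq0 -lt0n.
have e4 : beta / N%:R * ((N%:R - 2) * X + N%:R) = beta * X + beta - 2 * (beta * X / N%:R).
  by field.
have e5 : 0 <= beta * X / N%:R by apply: divr_ge0; [apply: mulr_ge0|apply: ler0n].
rewrite e4 in step. move: step e5 X0 hb1. clearbody X. move: (N%:R) (beta * X / N%:R) => n e; lra.
Qed.

Lemma ESp2 a : E (fun s => Sp a s ^+ 2) * (1 - beta) <= 6 * N%:R.
Proof.
have h1 := ES2.
have h2 : E (fun s => Sp a s ^+ 2) <= 2 * E (fun s => Sm s ^+ 2) + 2.
  rewrite -E_scale -[X in _ + X](E_const 2) -E_add; apply: E_le => s.
  rewrite Sp_eq; have := sp_sq s a; have := sqr_ge0 (Sm s + sp s a); nra.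
move: h1 h2 nN hb1 hb0; move: (E _) (E _) (N%:R) => Y X n.
nra.
Qed.

Lemma Ey2 a : E (fun s => yv a s ^+ 2) * (1 - beta) * N%:R <= 6.
Proof.
have NZ : (0 < (N%:R : R)) by rewrite ltr0n.
have e : E (fun s => yv a s ^+ 2) = (beta / N%:R) ^+ 2 * E (fun s => Sp a s ^+ 2).
  by rewrite -E_scale; apply: E_ext => s; rewrite /yv exprMn.
rewrite e.
have h := ESp2 a.
have -> : (beta / N%:R) ^+ 2 * E (fun s => Sp a s ^+ 2) * (1 - beta) * N%:R
   = beta ^+ 2 / N%:R * (E (fun s => Sp a s ^+ 2) * (1 - beta)).
  by field; rewrite gt_eqF.
apply: le_trans (_ : beta ^+ 2 / N%:R * (6 * N%:R) <= _).
  by rewrite ler_wpM2l // divr_ge0 ?sqr_ge0 // ltW.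
have -> : beta ^+ 2 / N%:R * (6 * N%:R) = 6 * beta ^+ 2 by field; rewrite gt_eqF.
have hb : beta ^+ 2 <= 1 by rewrite expr_le1 // ltW.
lra.
Qed.

Definition spB (B : {set 'I_N}) (s : config N) : R := \prod_(i in B) sp s i.

Lemma spB_norm (B : {set 'I_N}) s : `|spB B s| <= 1.
Proof.
by rewrite /spB normr_prod big1 // => i _; rewrite sp_norm.
Qed.

Lemma spB_flip (a : 'I_N) (B : {set 'I_N}) s : a \notin B -> spB B (flip a s) = spB B s.
Proof.
move=> aB; apply: eq_bigr => i iB; rewrite sp_flip_c //.
by apply: contraNneq aB => <-.
Qed.

Lemma spB_split (a : 'I_N) (B : {set 'I_N}) s : a \in B -> spB B s = sp s a * spB (B :\ a) s.
Proof. by move=> aB; rewrite /spB (big_setD1 a aB). Qed.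

Lemma spB_add (c : 'I_N) (A : {set 'I_N}) s : c \notin A -> sp s c * spB A s = spB (c |: A) s.
Proof. by move=> cA; rewrite /spB big_setU1. Qed.

Lemma Ey2' a : E (fun s => yv a s ^+ 2) * N%:R <= 6 / (1 - beta).
Proof.
rewrite ler_pdivlMr ?subr_gt0 //; have := Ey2 a.
by rewrite mulrAC.
Qed.

Lemma Mbound m : (0 < m)%N -> forall B : {set 'I_N}, #|B| = m ->
  `|E (spB B)| * N%:R <= (m%:R + 6 / (1 - beta)) / (1 - beta).
Proof.
move=> m0.
set q := 6 / (1 - beta).
have q0 : 0 <= q by rewrite divr_ge0 // subr_ge0 ltW.
have NZ : (0 < (N%:R : R)) by rewrite ltr0n.
set M := \big[Order.max/0]_(B : {set 'I_N} | #|B| == m) `|E (spB B)|.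
have M0 : 0 <= M by apply: bigmax_ge_id.
have claim : forall B : {set 'I_N}, #|B| = m ->
    `|E (spB B)| * N%:R <= m%:R + q + beta * M * N%:R.
  move=> B cB.
  have [a aB] : exists a, a \in B.
    by apply/set0Pn; rewrite -card_gt0 cB.
  set f := spB (B :\ a).
  have fi : forall s, f (flip a s) = f s.
    by move=> s; apply: spB_flip; rewrite setD11.
  have e1 : E (spB B) = E (fun s => yv a s * f s) +
                        E (fun s => (tnh (yv a s) - yv a s) * f s).
    rewrite -E_add (@E_ext _ (fun s => sp s a * f s)); last first.
      by move=> s; rewrite (@spB_split a B s aB).
    rewrite (@E_flip a f fi); apply: E_ext => s; ring.
  have e2 : `|E (fun s => (tnh (yv a s) - yv a s) * f s)| * N%:R <= q.
    rewrite /q; apply: le_trans (_ : _ <= E (fun s => yv a s ^+ 2) * N%:R) (Ey2' a).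
    apply: ler_wpM2r; first exact: ltW.
    apply: le_trans (E_norm (fun s => (tnh (yv a s) - yv a s) * f s)) _; apply: E_le => s.
    rewrite normrM; apply: le_trans (_ : `|tnh (yv a s) - yv a s| * 1 <= _).
      by rewrite ler_wpM2l // spB_norm.
    by rewrite mulr1 tnh_T2.
  have e3 : E (fun s => yv a s * f s) =
       beta / N%:R * \sum_(c | c != a) E (fun s => sp s c * f s).
    rewrite -E_sum -E_scale; apply: E_ext => s.
    by rewrite /yv /Sp -mulrA mulr_suml.
  have e4 : forall c, c != a ->
      `|E (fun s => sp s c * f s)| <= (c \in B)%:R + M.
    move=> c ca; case cB' : (c \in B).
      apply: le_trans (_ : 1 <= _); last by rewrite lerDl.
      apply: E_bound => s; rewrite normrM sp_norm mul1r; exact: spB_norm.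
    have cn : c \notin B :\ a by rewrite in_setD1 cB' andbF.
    rewrite add0r (@E_ext _ (spB (c |: (B :\ a)))); last first.
      by move=> s; rewrite spB_add.
    apply: le_bigmax_cond.
    by rewrite cardsU1 cn -cB (cardsD1 a B) aB.
  have e5 : `|\sum_(c | c != a) E (fun s => sp s c * f s)| <= m%:R + N%:R * M.
    apply: le_trans (ler_norm_sum _ _ _) _.
    apply: le_trans (_ : \sum_(c | c != a) ((c \in B)%:R + M) <= _).
      by apply: ler_sum => c ca; exact: e4.
    apply: le_trans (_ : \sum_c ((c \in B)%:R + M) <= _).
      rewrite [X in _ <= X](bigD1 a) //= lerDr addr_ge0 //.
    rewrite big_split /= sumr_const card_ord.
    rewrite (eq_bigr (fun c => if c \in B then 1 else 0)); last first.
      by move=> c _; case: (c \in B).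
    rewrite -big_mkcond sumr_const -cB mulr_natl.
    done.
  rewrite e1; apply: le_trans (_ : (`|E (fun s => yv a s * f s)| + `|E (fun s => (tnh (yv a s) - yv a s) * f s)|) * N%:R <= _).
    by apply: ler_wpM2r; [exact: ltW | exact: ler_normD].
  rewrite mulrDl e3 normrM ger0_norm ?divr_ge0 //.
  have : beta / N%:R * `|\sum_(c | c != a) E (fun s => sp s c * f s)| * N%:R
       <= beta * (m%:R + N%:R * M).
    set X := `|_|.
    have -> : beta / N%:R * X * N%:R = beta * X by field; rewrite gt_eqF.
    by apply: ler_wpM2l.
  have : beta * m%:R <= m%:R by rewrite ler_piMl // ltW.
  move=> h1 h2; move: h1 h2 e2.
  move: (beta / N%:R * _ * N%:R) (`|E (fun s => (tnh (yv a s) - yv a s) * f s)| * N%:R) => U V.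
  lra.
have MN : M * N%:R <= m%:R + q + beta * M * N%:R.
  rewrite -ler_pdivlMr //; apply: bigmax_le.
    have h1 : 0 <= beta * M * N%:R by rewrite !mulr_ge0 // ltW.
    have h2 : 0 <= (m%:R : R) := ler0n _ _.
    apply: divr_ge0; [lra | exact: ltW].
  move=> B /eqP cB; rewrite ler_pdivlMr //; exact: claim.
move=> B cB.
have EM : `|E (spB B)| <= M by apply: le_bigmax_cond; rewrite cB.
rewrite ler_pdivlMr ?subr_gt0 //.
have : `|E (spB B)| * N%:R <= M * N%:R by apply: ler_wpM2r => //; exact: ltW.
move=> hV.
have hp : 0 <= (M * N%:R - `|E (spB B)| * N%:R) * (1 - beta).
  by apply: mulr_ge0; rewrite subr_ge0 // ltW.
move: hp MN; move: (`|E (spB B)|) => V.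
nra.
Qed.

End Gibbs.

Lemma block_bound (R : realType) (beta : R) (n N : nat) (i j : 'I_n -> 'I_N) :
  0 <= beta -> beta < 1 -> (0 < N)%N -> pairwise_distinct i j ->
  forall Bk : {set 'I_n}, Bk != finset.set0 ->
  `|CW_gibbs beta (fun s => \prod_(k in Bk) (@spin R N s (i k) * spin s (j k)))| * N%:R
    <= ((2 * n)%:R + 6 / (1 - beta)) / (1 - beta).
Proof.
move=> hb0 hb1 N0 [ii [ij dij]] Bk Bk0.
set X := i @: Bk :|: j @: Bk.
have dis : [disjoint i @: Bk & j @: Bk].
  apply/pred0P => x /=; apply/negbTE/negP => /andP[/imsetP[k _ ->] /imsetP[l _]].
  exact: dij.
have eq : forall s, \prod_(k in Bk) (@spin R N s (i k) * spin s (j k)) = spB R N X s.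
  move=> s; rewrite big_split /= /spB.
  rewrite (eq_bigl [predU i @: Bk & j @: Bk]); last by move=> x; rewrite !inE.
  rewrite bigU //= !big_imset //.
  - by move=> x y _ _; apply: ij.
  - by move=> x y _ _; apply: ii.
have cX : #|X| = (2 * #|Bk|)%N.
  by rewrite cardsU (disjoint_setI0 dis) cards0 subn0 !card_imset // mul2n addnn.
rewrite -/(E R N beta _) (@E_ext R N beta _ _ eq).
have m0 : (0 < 2 * #|Bk|)%N by rewrite muln_gt0 /= card_gt0.
apply: le_trans (@Mbound R N beta N0 hb0 hb1 _ m0 X cX) _.
have q0 : 0 <= 6 / (1 - beta) by rewrite divr_ge0 // subr_ge0 ltW.
rewrite ler_pM2r ?invr_gt0 ?subr_gt0 // lerD2r ler_nat leq_mul2l /=.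
by have := max_card Bk; rewrite card_ord.
Qed.

Theorem proposition2p6 (R : realType) (beta : R) (n : nat) :
  0 <= beta -> beta < 1 -> (2 <= n)%N ->
  exists C : R, 0 < C /\
    forall (N : nat), (2 * n <= N)%N ->
    forall (i j : 'I_n -> 'I_N), pairwise_distinct i j ->
      `|@pair_corr R N n beta i j| <= C / N%:R.
Proof.
move=> hb0 hb1 hn.
set K := ((2 * n)%:R + 6 / (1 - beta)) / (1 - beta).
have q0 : 0 <= 6 / (1 - beta) by rewrite divr_ge0 // subr_ge0 ltW.
have K0 : 0 <= K.
  apply: divr_ge0; last by rewrite subr_ge0 ltW.
  by apply: addr_ge0.
set S := \sum_(P in set_partitions n) ((#|P|.-1)`!%:R : R).
have S0 : 0 <= S by apply: sumr_ge0 => P _; exact: ler0n.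
exists (S * K + 1); split.
  by rewrite ltr_pwDr // mulr_ge0.
move=> N hN i j dij.
have N0 : (0 < N)%N by apply: leq_trans hN; rewrite muln_gt0 /= (leq_trans _ hn).
have NZ : (0 < (N%:R : R)) by rewrite ltr0n.
pose g (Bk : {set 'I_n}) := CW_gibbs beta
   (fun s => \prod_(k in Bk) (@spin R N s (i k) * spin s (j k))).
have g1 : forall Bk, 0 <= `|g Bk| <= 1.
  move=> Bk; rewrite normr_ge0 /=; apply: E_bound => s.
  rewrite normr_prod; apply: prodr_ile1 => k _.
  by rewrite normr_ge0 normrM !sp_norm mulr1 /=.
have gK : forall Bk, Bk != finset.set0 -> `|g Bk| <= K / N%:R.
  move=> Bk Bk0; rewrite ler_pdivlMr //; exact: block_bound.
have x0 : 'I_n by exists 0%N; apply: leq_trans hn.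
have term : forall P, P \in set_partitions n ->
    `|\prod_(B in P) g B| <= K / N%:R.
  move=> P; rewrite inE => /and3P[/eqP cP _ P0].
  have : x0 \in finset.cover P by rewrite cP inE.
  move=> /finset.bigcupP[B0 B0P xB0].
  rewrite normr_prod (bigD1 B0) //=.
  apply: le_trans (_ : `|g B0| * 1 <= _); last first.
    rewrite mulr1 gK //; apply/set0Pn; by exists x0.
  apply: ler_wpM2l => //; apply: prodr_ile1 => B _; exact: g1.
rewrite /pair_corr /cumulant.
apply: le_trans (ler_norm_sum _ _ _) _.
apply: le_trans (_ : \sum_(P in set_partitions n) ((#|P|.-1)`!%:R * (K / N%:R)) <= _).
  apply: ler_sum => P PP.
  rewrite normrM normrM normrX normrN normr1 expr1n mul1r ger0_norm ?ler0n //.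
  by apply: ler_wpM2l => //; exact: term P PP.
rewrite -mulr_suml -/S mulrA ler_pM2r ?invr_gt0 //.
by rewrite lerDl.
Qed.
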